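(* Tight GFG-NCWs are weak-type: every tight GFG-NCW $\mathcal{A}=\langle\Sigma,Q,Q_0,\delta,\alpha\rangle$ whose language is recognized by some GFG-NWW has an equivalent GFG-NWW on the same structure, i.e. there is $\alpha'\subseteq Q$ such that $\langle\Sigma,Q,Q_0,\delta,\alpha'\rangle$ is a weak automaton, is GFG, and recognizes $L(\mathcal{A})$.
   Context: An automaton $\langle\Sigma,Q,Q_0,\delta,\alpha\rangle$ has $\delta:Q\times\Sigma\to2^Q$; runs are accepting if the set $S$ of infinitely visited states satisfies $\alpha$: co-Büchi ($\alpha\subseteq Q$): $S\cap\alpha=\emptyset$; Büchi: $S\cap\alpha\ne\emptyset$. A Büchi automaton is weak if every strongly connected component $C$ of its state graph satisfies $C\subseteq\alpha$ or $C\cap\alpha=\emptyset$ (it may equivalently be viewed as a co-Büchi automaton with rejecting set $Q\setminus\alpha$). NCW: nondeterministic co-Büchi word automaton; NWW: nondeterministic weak word automaton. $\mathcal{A}$ is GFG if there is a strategy $g:\Sigma^*\to Q$ such that for every $w=a_1a_2\cdots$, $g(\epsilon),g(a_1),g(a_1a_2),\ldots$ is a run on $w$, accepting whenever $w\in L(\mathcal{A})$. Finite-state strategies are transducers $g=\langle\Sigma,Q,M,m_0,\rho,\tau\rangle$ (finite memories $M$, $\rho:M\times\Sigma\to M$ extended to words from $m_0$, $\tau:M\to Q$, $g(u)=\tau(\rho(u))$); $m$ is a memory of $q$ if $\tau(m)=q$. $\mathcal{A}_g=\langle\Sigma,M,m_0,\rho,\alpha_g\rangle$ with $\alpha_g=\{m\mid\tau(m)\in\alpha\}$.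 A transition $\langle q,a,q'\rangle$ is used by $g$ if $q=g(u)$, $q'=g(ua)$ for some $u$. A combination of paths from a set $P$ of finite paths is the union of the element sets of a nonempty subset of $P$. For memories $m\neq m'$ with $\tau(m)=\tau(m')$, $m$ is replaceable by $m'$ if the set of paths of $\mathcal{A}_g$ from $m'$ to $m$ is empty or all its combinations are accepting. $\mathcal{A}$ is tight if for some finite-state strategy $g$ witnessing its GFGness, every transition is used by $g$ and no memory is replaceable by a different memory of the same state. *)

(* Defs.v *)
From mathcomp Require Import all_boot.
Set Implicit Arguments. Unset Strict Implicit. Unset Printing Implicit Defensive.

Section Automata.
Variables (Sigma Q : finType).

Definition word := nat -> Sigma.

(* Prefix a_1 ... a_n of w (0-indexed: w 0 ... w (n-1)). *)
Definition prefix (w : word) (n : nat) : seq Sigma := mkseq w n.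

Definition is_run (Q0 : {set Q}) (delta : Q -> Sigma -> {set Q})
  (w : word) (r : nat -> Q) : Prop :=
  r 0 \in Q0 /\ forall i, r i.+1 \in delta (r i) (w i).

Definition inf_often (r : nat -> Q) (q : Q) : Prop :=
  forall n, exists m, n <= m /\ r m = q.

Definition coBuchi_acc (alpha : {set Q}) (r : nat -> Q) : Prop :=
  forall q, q \in alpha -> ~ inf_often r q.

Definition Buchi_acc (alpha : {set Q}) (r : nat -> Q) : Prop :=
  exists q, q \in alpha /\ inf_often r q.

Definition lang (Q0 : {set Q}) (delta : Q -> Sigma -> {set Q})
  (acc : (nat -> Q) -> Prop) (w : word) : Prop :=
  exists r, is_run Q0 delta w r /\ acc r.

Definition GFG_strategy (Q0 : {set Q}) (delta : Q -> Sigma -> {set Q})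
  (acc : (nat -> Q) -> Prop) (g : seq Sigma -> Q) : Prop :=
  forall w : word,
    is_run Q0 delta w (fun n => g (prefix w n)) /\
    (lang Q0 delta acc w -> acc (fun n => g (prefix w n))).

Definition is_GFG (Q0 : {set Q}) (delta : Q -> Sigma -> {set Q})
  (acc : (nat -> Q) -> Prop) : Prop :=
  exists g, GFG_strategy Q0 delta acc g.

Definition state_edge (delta : Q -> Sigma -> {set Q}) : rel Q :=
  fun q q' => [exists a, q' \in delta q a].

Definition is_weak (delta : Q -> Sigma -> {set Q}) (alpha : {set Q}) : Prop :=
  forall q q', connect (state_edge delta) q q' -> connect (state_edge delta) q' q ->
    (q \in alpha) = (q' \in alpha).

End Automata.

(* Finite-state strategies (transducers) <Sigma,Q,M,m0,rho,tau>. *)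
Section Transducer.
Variables (Sigma Q M : finType) (m0 : M) (rho : M -> Sigma -> M) (tau : M -> Q).

Definition rho_star (u : seq Sigma) : M := foldl rho m0 u.

Definition strat (u : seq Sigma) : Q := tau (rho_star u).

Definition trans_used (q : Q) (a : Sigma) (q' : Q) : Prop :=
  exists u, strat u = q /\ strat (rcons u a) = q'.

Definition Ag_path (m' m : M) (p : seq M) : Prop :=
  exists p', p = m' :: p' /\ last m' p' = m /\
    forall i, i < size p' ->
      exists a, nth m' p i.+1 = rho (nth m' p i) a.

Definition combination (P : seq M -> Prop) (S : {set M}) : Prop :=
  exists P' : seq M -> Prop,
    (forall p, P' p -> P p) /\ (exists p, P' p) /\
    (forall x, x \in S <-> exists p, P' p /\ x \in p).

(* alpha_g = { m | tau m \in alpha }; A_g is co-Buchi, so a set S of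
   memories is accepting iff S \cap alpha_g = empty. *)
Definition alpha_g (alpha : {set Q}) : {set M} := [set m | tau m \in alpha].

Definition coBuchi_set_acc (alpha : {set Q}) (S : {set M}) : Prop :=
  [disjoint S & alpha_g alpha].

Definition replaceable (alpha : {set Q}) (m m' : M) : Prop :=
  m != m' /\ tau m = tau m' /\
  ((forall p, ~ Ag_path m' m p) \/
   (forall S, combination (Ag_path m' m) S -> coBuchi_set_acc alpha S)).

End Transducer.

Definition tight (Sigma Q : finType) (Q0 : {set Q})
  (delta : Q -> Sigma -> {set Q}) (alpha : {set Q}) : Prop :=
  exists (M : finType) (m0 : M) (rho : M -> Sigma -> M) (tau : M -> Q),
    GFG_strategy Q0 delta (coBuchi_acc alpha) (strat m0 rho tau) /\
    (forall q a q', q' \in delta q a -> trans_used m0 rho tau q a q') /\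
    (forall m m', ~ replaceable rho tau alpha m m').

(* Main.v *)
Require Import Defs.
From mathcomp Require Import all_boot.
From Stdlib Require Import Classical ClassicalEpsilon.
From mathcomp Require Import zify.
Set Implicit Arguments. Unset Strict Implicit. Unset Printing Implicit Defensive.

Notation pref := Defs.prefix.

Lemma fin_inf_seq (T : finType) (r : nat -> T) (s : seq T) :
  (forall n, exists m, n <= m /\ r m \in s) -> exists q, q \in s /\ inf_often r q.
Proof.
elim: s => [|x s IH] H.
  by have [m [_ ]] := H 0.
have [Hx|Hx] := classic (inf_often r x).
  by exists x; rewrite mem_head.
have [N HN] : exists N, forall m, N <= m -> r m <> x.
  apply: NNPP => C; apply: Hx => n.
  apply: NNPP => C2; apply: C; exists n => m Hm E; apply: C2; by exists m.
have [|q [Hq Hi]] := IH.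
  move=> n; have [m [Hm Hr]] := H (maxn n N).
  exists m; split; first by apply: leq_trans Hm; rewrite leq_maxl.
  move: Hr; rewrite inE => /orP [/eqP E|//].
  by exfalso; apply: (HN m) => //; apply: leq_trans Hm; rewrite leq_maxr.
by exists q; rewrite inE Hq orbT.
Qed.

Lemma fin_inf (T : finType) (A : {set T}) (r : nat -> T) :
  (forall n, exists m, n <= m /\ r m \in A) -> exists q, q \in A /\ inf_often r q.
Proof.
move=> H; have [|q [Hq Hi]] := @fin_inf_seq T r (enum A).
  by move=> n; have [m [Hm Hr]] := H n; exists m; rewrite mem_enum.
by exists q; rewrite -mem_enum.
Qed.

Lemma coBuchi_N (Q : finType) (alpha : {set Q}) r :
  coBuchi_acc alpha r -> exists N, forall n, N <= n -> r n \notin alpha.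
Proof.
move=> H; apply: NNPP => C.
have : forall n, exists m, n <= m /\ r m \in alpha.
  move=> n; apply: NNPP => C2; apply: C; exists n => m Hm; apply/negP => Hr.
  by apply: C2; exists m.
move/fin_inf => [q [Hq Hi]]; exact: (H q Hq Hi).
Qed.

Lemma mkseq_add (T : Type) (f : nat -> T) a b :
  mkseq f (a + b) = mkseq f a ++ mkseq (fun i => f (a + i)) b.
Proof. by rewrite /mkseq iotaD map_cat add0n -{2}(addn0 a) iotaDl -map_comp. Qed.

Lemma run_conn (Sigma Q : finType) (delta : Q -> Sigma -> {set Q}) (w : word Sigma) r :
  (forall i, r i.+1 \in delta (r i) (w i)) ->
  forall i j, i <= j -> connect (state_edge delta) (r i) (r j).
Proof.
move=> H i j /subnK <-; elim: (j - i) => [|k IH]; first by rewrite add0n connect0.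
rewrite addSn; apply: connect_trans IH (connect1 _).
by apply/existsP; exists (w (k + i)); exact: H.
Qed.

Section Main.
Variables (Sigma Q M Q' : finType) (Q0 : {set Q}) (delta : Q -> Sigma -> {set Q})
  (alpha : {set Q}) (m0 : M) (rho : M -> Sigma -> M) (tau : M -> Q)
  (Q0' : {set Q'}) (delta' : Q' -> Sigma -> {set Q'}) (beta : {set Q'})
  (G : seq Sigma -> Q').
Hypothesis HgA : GFG_strategy Q0 delta (coBuchi_acc alpha) (strat m0 rho tau).
Hypothesis HgB : GFG_strategy Q0' delta' (Buchi_acc beta) G.
Hypothesis Heq : forall w, lang Q0' delta' (Buchi_acc beta) w <->
                           lang Q0 delta (coBuchi_acc alpha) w.

Definition Rg (x y : M) : bool := [exists c, y == rho x c].

Lemma connect_word a b : connect Rg a b -> exists s, foldl rho a s = b.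
Proof.
case/connectP => p Hp ->; elim: p a Hp => [|y p IH] a /=; first by exists [::].
case/andP => /existsP [c /eqP E] Hp; have [s Hs] := IH y Hp.
by exists (c :: s) => /=; rewrite -E.
Qed.

Hypothesis Hused : forall q a q', q' \in delta q a -> trans_used m0 rho tau q a q'.
Hypothesis Htight : forall m m', ~ replaceable rho tau alpha m m'.

Lemma same_state_conn y m : tau y = tau m -> connect Rg y m.
Proof.
case: (eqVneq y m) => [-> _|ne E]; first exact: connect0.
apply: NNPP => C; have HT := @Htight m y; apply: HT; split; first by rewrite eq_sym.
split; first by rewrite E.
left => p [p' [Hp [Hl Hs]]]; apply: C; apply/connectP; exists p'; last by rewrite Hl.
apply/(pathP y) => i Hi; have [a Ha] := Hs i Hi.
apply/existsP; exists a; rewrite Hp /= in Ha; by rewrite Ha.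
Qed.

Lemma lift_conn q1 q2 : connect (state_edge delta) q1 q2 ->
  forall y, tau y = q1 -> exists y', tau y' = q2 /\ connect Rg y y'.
Proof.
case/connectP => p Hp ->; elim: p q1 Hp => [|q p IH] q1 /= Hp y Hy.
  by exists y; split => //; exact: connect0.
case/andP: Hp => /existsP [a Ha] Hp.
have [u [Hu1 Hu2]] := Hused Ha.
have [|y' [Hy' Hc]] := IH q Hp (rho (rho_star m0 rho u) a).
  by rewrite -Hu2 /strat /rho_star foldl_rcons.
exists y'; split => //.
apply: connect_trans (@same_state_conn y (rho_star m0 rho u) _) _.
  by rewrite Hy -Hu1.
apply: connect_trans (connect1 _) Hc.
by apply/existsP; exists a.
Qed.

Variable d : Sigma.
Definition limw (f : nat -> seq Sigma) : word Sigma := fun n => nth d (f n.+1) n.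

Lemma chain_le (f : nat -> seq Sigma) : (forall i, exists s, f i.+1 = f i ++ s) ->
  forall i j, i <= j -> exists s, f j = f i ++ s.
Proof.
move=> H i j /subnK <-; elim: (j - i) => [|k [s IH]]; first by exists [::]; rewrite cats0.
have [t Ht] := H (k + i); exists (s ++ t); by rewrite addSn Ht IH catA.
Qed.

Lemma lim_prefix (f : nat -> seq Sigma) : (forall i, exists s, f i.+1 = f i ++ s) ->
  (forall i, i <= size (f i)) ->
  forall n i, n <= size (f i) -> pref (limw f) n = take n (f i).
Proof.
move=> Hc Hs n i Hn; apply: (@eq_from_nth _ d).
  by rewrite size_mkseq size_takel.
rewrite size_mkseq => k Hk; rewrite nth_mkseq // nth_take // /limw.
have [s1 E1] := chain_le Hc (leq_maxl i k.+1).
have [s2 E2] := chain_le Hc (leq_maxr i k.+1).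
have : nth d (f (maxn i k.+1)) k = nth d (f (maxn i k.+1)) k by [].
rewrite {1}E1 {1}E2 !nth_cat.
have -> : k < size (f i) by apply: leq_trans Hk Hn.
by have -> : k < size (f k.+1) by apply: Hs.
Qed.

Definition pw (r : seq Sigma) i := iter i (fun s => s ++ r) [::].

Lemma size_pw r i : size (pw r i) = i * size r.
Proof. by elim: i => //= i IH; rewrite size_cat IH mulSn addnC. Qed.

Lemma foldl_pw r x i : foldl rho x r = x -> foldl rho x (pw r i) = x.
Proof. by move=> H; elim: i => //= i IH; rewrite foldl_cat IH. Qed.

Lemma take_pw_good m r : (forall j, tau (foldl rho m (take j r)) \notin alpha) ->
  foldl rho m r = m -> forall i j, tau (foldl rho m (take j (pw r i))) \notin alpha.
Proof.
move=> Hg Hr; elim=> [|i IH] j /=.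
  by have := Hg 0; rewrite take0.
rewrite take_cat; case: ifP => _; first exact: IH.
by rewrite foldl_cat foldl_pw.
Qed.

Variables (m x : M) (u0 r1 r2a r2b : seq Sigma).
Hypotheses (Hu0 : foldl rho m0 u0 = m) (Hr1s : 0 < size r1) (Hr1 : foldl rho m r1 = m)
  (Hr1g : forall j, tau (foldl rho m (take j r1)) \notin alpha)
  (Hx : foldl rho m r2a = x) (Hxm : foldl rho x r2b = m) (Hxa : tau x \in alpha).

Lemma inL v : foldl rho m0 v = m ->
  lang Q0 delta (coBuchi_acc alpha) (limw (fun i => v ++ pw r1 i)).
Proof.
move=> Hv; set f := fun i => v ++ pw r1 i.
have Hc : forall i, exists s, f i.+1 = f i ++ s by move=> i; exists r1; rewrite /f /= catA.
have Hs : forall i, i <= size (f i).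
  move=> i; rewrite /f size_cat size_pw; apply: leq_trans (leq_addl _ _).
  by rewrite leq_pmulr.
exists (fun n => strat m0 rho tau (pref (limw f) n)); split; first exact: (HgA _).1.
move=> q Hq Hinf; have [n [Hn E]] := Hinf (size v).
move: E; rewrite (lim_prefix Hc Hs (Hs n)) /f take_cat ltnNge Hn /= /strat /rho_star.
rewrite foldl_cat Hv => E.
by have := take_pw_good Hr1g Hr1 n (n - size v); rewrite E Hq.
Qed.

Definition Phit v k := exists j, size v < j /\ j <= size (v ++ pw r1 k) /\
  G (take j (v ++ pw r1 k)) \in beta.

Lemma hit_exists v : foldl rho m0 v = m -> exists k, Phit v k.
Proof.
move=> Hv; set f := fun i => v ++ pw r1 i.
have Hc : forall i, exists s, f i.+1 = f i ++ s by move=> i; exists r1; rewrite /f /= catA.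
have Hs : forall i, i <= size (f i).
  move=> i; rewrite /f size_cat size_pw; apply: leq_trans (leq_addl _ _).
  by rewrite leq_pmulr.
have L := inL Hv; apply Heq in L.
have [q [Hq Hinf]] := (HgB (limw f)).2 L.
have [j [Hj E]] := Hinf (size v).+1.
exists j, j; split => //; split; first exact: Hs.
by move: E; rewrite (lim_prefix Hc Hs (Hs j)) => ->.
Qed.

Definition K v := epsilon (inhabits 0) (Phit v).

Fixpoint V i := match i with 0 => u0 | i.+1 => V i ++ pw r1 (K (V i)) ++ (r2a ++ r2b) end.

Lemma contradiction : False.
Proof.
have HV : forall i, foldl rho m0 (V i) = m.
  elim=> //= i IH; by rewrite !foldl_cat IH foldl_pw // Hx Hxm.
have HK : forall i, Phit (V i) (K (V i)) by move=> i; apply: epsilon_spec; exact: hit_exists.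
have Hr2 : 0 < size (r2a ++ r2b).
  case: r2a Hx => [|c s] /= Hx'; last by [].
  by move: (Hr1g 0); rewrite take0 /= Hx' Hxa.
have Hc : forall i, exists s, V i.+1 = V i ++ s by move=> i; eexists.
have Hs : forall i, i <= size (V i).
  elim=> // i IH /=; rewrite !size_cat; apply: leq_trans (_ : i + size (r2a ++ r2b) <= _).
    by rewrite -addn1 leq_add2l.
  by rewrite size_cat; move: IH; lia.
have LB : lang Q0' delta' (Buchi_acc beta) (limw V).
  exists (fun n => G (pref (limw V) n)); split; first exact: (HgB _).1.
  apply: fin_inf => n; have [j [Hj1 [Hj2 Hj3]]] := HK n.
  exists j; split; first by apply: leq_trans (Hs n) (ltnW Hj1).
  have Hjs : j <= size (V n.+1) by rewrite /= catA size_cat; apply: leq_trans Hj2 (leq_addr _ _).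
  by rewrite (lim_prefix Hc Hs Hjs) /= catA takel_cat.
have := (HgA (limw V)).2 (proj1 (Heq _) LB) (tau x) Hxa; apply => n.
exists (size (V n ++ pw r1 (K (V n)) ++ r2a)); split.
  by rewrite size_cat; apply: leq_trans (Hs n) (leq_addr _ _).
have Hjs : size (V n ++ pw r1 (K (V n)) ++ r2a) <= size (V n.+1).
  by rewrite /= !catA [X in _ <= X]size_cat leq_addr.
rewrite (lim_prefix Hc Hs Hjs) /= !catA takel_cat ?take_size //.
by rewrite /strat /rho_star !foldl_cat HV foldl_pw // Hx.
Qed.

End Main.

Definition alphaW (Sigma Q : finType) (delta : Q -> Sigma -> {set Q}) (alpha : {set Q}) : {set Q} :=
  [set q | [forall q2, (q2 \in alpha) ==>
     ~~ (connect (state_edge delta) q q2 && connect (state_edge delta) q2 q)]].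

Lemma weakW (Sigma Q : finType) (delta : Q -> Sigma -> {set Q}) (alpha : {set Q}) :
  is_weak delta (alphaW delta alpha).
Proof.
have H : forall q q', connect (state_edge delta) q q' -> connect (state_edge delta) q' q ->
  q \in alphaW delta alpha -> q' \in alphaW delta alpha.
  move=> q q' c1 c2; rewrite !inE => /forallP H; apply/forallP => q2.
  apply/implyP => Hq2; have := H q2; rewrite Hq2 /=; apply: contra => /andP [a b].
  by apply/andP; split; [apply: connect_trans c1 a | apply: connect_trans b c2].
by move=> q q' c1 c2; apply/idP/idP; [exact: H | exact: H].
Qed.

Lemma soundW (Sigma Q : finType) (Q0 : {set Q}) (delta : Q -> Sigma -> {set Q})
  (alpha : {set Q}) w r :
  is_run Q0 delta w r -> Buchi_acc (alphaW delta alpha) r -> coBuchi_acc alpha r.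
Proof.
move=> [_ Hst] [q [Hq Hinf]] q2 Hq2 Hinf2.
have [n [_ E1]] := Hinf 0; have [j [Hj E2]] := Hinf2 n; have [k [Hk E3]] := Hinf j.
have c1 := run_conn Hst Hj; have c2 := run_conn Hst Hk.
rewrite E1 E2 in c1; rewrite E2 E3 in c2.
by move: Hq; rewrite inE => /forallP /(_ q2); rewrite Hq2 c1 c2.
Qed.

Theorem theorem18 (Sigma Q : finType) (Q0 : {set Q})
  (delta : Q -> Sigma -> {set Q}) (alpha : {set Q}) :
  (* A is a tight GFG-NCW *)
  tight Q0 delta alpha ->
  (* L(A) is recognized by some GFG-NWW *)
  (exists (Q' : finType) (Q0' : {set Q'}) (delta' : Q' -> Sigma -> {set Q'})
          (beta : {set Q'}),
      is_weak delta' beta /\ is_GFG Q0' delta' (Buchi_acc beta) /\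
      forall w, lang Q0' delta' (Buchi_acc beta) w <->
                lang Q0 delta (coBuchi_acc alpha) w) ->
  exists alpha' : {set Q},
    is_weak delta alpha' /\ is_GFG Q0 delta (Buchi_acc alpha') /\
    forall w, lang Q0 delta (Buchi_acc alpha') w <->
              lang Q0 delta (coBuchi_acc alpha) w.
Proof.
move=> [M [m0 [rho [tau [HgA [Hused Htight]]]]]] [Q' [Q0' [delta' [beta [_ [[G HgB] Heq]]]]]].
have main : forall w, lang Q0 delta (coBuchi_acc alpha) w ->
    Buchi_acc (alphaW delta alpha) (fun n => strat m0 rho tau (pref w n)).
  move=> w Hw; apply: NNPP => NB.
  have [N HN] := coBuchi_N ((HgA w).2 Hw).
  pose mu n := foldl rho m0 (pref w n).
  have [m [_ Hm]] := @fin_inf M [set: M] mu (fun n => ex_intro _ n (conj (leqnn n) (in_setT _))).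
  have Hq : tau m \notin alphaW delta alpha.
    apply/negP => Hq; apply: NB; exists (tau m); split => // n.
    by have [j [Hj E]] := Hm n; exists j; rewrite /strat /rho_star -/(mu j) E.
  move: Hq; rewrite inE negb_forall => /existsP [q2].
  rewrite negb_imply negbK => /andP [Hq2 /andP [c1 c2]].
  have [x [Hx cx]] := lift_conn Hused Htight c1 (erefl _).
  have [y [Hy cy]] := lift_conn Hused Htight c2 Hx.
  have cxm : connect (Rg rho) x m.
    apply: connect_trans cy (same_state_conn Htight _); exact: Hy.
  have [r2a Hr2a] := connect_word cx.
  have [r2b Hr2b] := connect_word cxm.
  have [n1 [Hn1 E1]] := Hm N.
  have [n2 [Hn2 E2]] := Hm n1.+1.
  pose r1 := mkseq (fun i => w (n1 + i)) (n2 - n1).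
  have Hpre : forall j, pref w (n1 + j) = pref w n1 ++ mkseq (fun i => w (n1 + i)) j.
    by move=> j; rewrite /Defs.prefix mkseq_add.
  have Hr1 : foldl rho m r1 = m.
    by rewrite -{1}E1 /mu -foldl_cat -Hpre (subnKC (ltnW Hn2)); exact: E2.
  have Hr1g : forall j, tau (foldl rho m (take j r1)) \notin alpha.
    move=> j; case: (leqP j (n2 - n1)) => Hj; last first.
      rewrite take_oversize; last by rewrite size_mkseq ltnW.
      rewrite Hr1 -E1.
      by have := HN n1 Hn1.
    rewrite /r1 -(subnKC Hj) mkseq_add take_size_cat ?size_mkseq //.
    rewrite -E1 /mu -foldl_cat -Hpre.
    by have := HN (n1 + j) (leq_trans Hn1 (leq_addr _ _)).
  have Hr1s : 0 < size r1 by rewrite size_mkseq subn_gt0.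
  exact: (contradiction HgA HgB Heq (w 0) E1 Hr1s Hr1 Hr1g Hr2a Hr2b (etrans (congr1 (fun z => z \in alpha) Hx) Hq2)).
exists (alphaW delta alpha); split; first exact: weakW.
have sl : forall w, lang Q0 delta (Buchi_acc (alphaW delta alpha)) w ->
    lang Q0 delta (coBuchi_acc alpha) w.
  by move=> w [r [Hr Ha]]; exists r; split => //; exact: soundW Hr Ha.
split.
  exists (strat m0 rho tau) => w; split; first exact: (HgA w).1.
  by move=> H; apply: main; apply: sl.
move=> w; split; first exact: sl.
by move=> H; exists (fun n => strat m0 rho tau (pref w n)); split; [exact: (HgA w).1 | exact: main].
Qed.
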